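(* Let $G(\vec x,\vec y)$ be a propositional formula over Boolean variables $\vec x=(x_0,\dots,x_{m-1})$ and $\vec y=(y_0,\dots,y_{n-1})$, and let $\psi \equiv \exists \vec x.\,\forall \vec y.\, G(\vec x,\vec y)$. Let $\mathit{enc}:\mathbb{B}^m\to[0,2^m-1]$ be the standard binary encoding with $x_0$ the lowest-order bit, and for $\vec x \neq \top^m$ (the all-true vector) let $\mathit{succ}(\vec x)$ be the unique vector with $\mathit{enc}(\mathit{succ}(\vec x)) = \mathit{enc}(\vec x)+1$. Consider the transition system with state space $\mathbb{B}^m\times\mathbb{B}$ (states $(\vec x,o)$), initial condition $I \equiv (\vec x=\bot^m \land o=\bot)$, and transition relation $$\tau(\vec x,o,\vec x',o') \equiv \Big(\lnot(\forall \vec y.\,G(\vec x,\vec y)) \land \big((\vec x\neq\top^m \land \vec x'=\mathit{succ}(\vec x)\land o'=o)\lor(\vec x=\top^m\land o'=\top)\big)\Big) \lor \big(\vec x'=\vec x\land o'=o\big).$$ Then there exists an inductive invariant $R\subseteq \mathbb{B}^m\times\mathbb{B}$ of this system with $R\neq \mathbb{B}^m\times\mathbb{B}$ if and only if $\psi$ is true. *)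

(* Defs.v *)
From HB Require Import structures.
From mathcomp Require Import all_boot.
Set Implicit Arguments. Unset Strict Implicit. Unset Printing Implicit Defensive.

Inductive form (m n : nat) : Type :=
  | FX of 'I_m
  | FY of 'I_n
  | FTrue
  | FFalse
  | FNot of form m n
  | FAnd of form m n & form m n
  | FOr of form m n & form m n.

Fixpoint eval m n (G : form m n) (x : {ffun 'I_m -> bool}) (y : {ffun 'I_n -> bool}) : bool :=
  match G with
  | FX i => x i
  | FY j => y j
  | FTrue => true
  | FFalse => false
  | FNot g => ~~ eval g x y
  | FAnd g h => eval g x y && eval h x y
  | FOr g h => eval g x y || eval h x y
  end.

Definition enc m (x : {ffun 'I_m -> bool}) : nat := \sum_(i < m) (x i) * 2 ^ i.

Definition allT m (x : {ffun 'I_m -> bool}) : bool := [forall i, x i].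

Definition forallY m n (G : form m n) (x : {ffun 'I_m -> bool}) : bool :=
  [forall y : {ffun 'I_n -> bool}, eval G x y].

Definition state (m : nat) : finType := ({ffun 'I_m -> bool} * bool)%type.

Definition init m (s : state m) : Prop := s.1 = [ffun => false] /\ s.2 = false.

(* x' = succ x is written as enc x' = enc x + 1 (succ x is the unique such vector). *)
Definition tau m n (G : form m n) (s s' : state m) : Prop :=
  (~~ forallY G s.1 /\
     ((~~ allT s.1 /\ enc s'.1 = enc s.1 + 1 /\ s'.2 = s.2) \/
      (allT s.1 /\ s'.2 = true)))
  \/ (s'.1 = s.1 /\ s'.2 = s.2).

Definition inductive_invariant m n (G : form m n) (R : {set state m}) : Prop :=
  (forall s, init s -> s \in R) /\
  (forall s s', s \in R -> tau G s s' -> s' \in R).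

(* Main.v *)
Require Import Defs.
From HB Require Import structures.
From mathcomp Require Import all_boot.
From mathcomp Require Import zify.
Set Implicit Arguments. Unset Strict Implicit. Unset Printing Implicit Defensive.

Lemma encS m (x : {ffun 'I_m.+1 -> bool}) :
  enc x = x ord0 + 2 * enc [ffun i : 'I_m => x (lift ord0 i)].
Proof.
rewrite /enc big_ord_recl expn0 muln1 big_distrr /=; congr (_ + _).
apply: eq_bigr => i _; rewrite ffunE /= expnS; lia.
Qed.

Lemma enc_inj m (x y : {ffun 'I_m -> bool}) : enc x = enc y -> x = y.
Proof.
elim: m x y => [|m IH] x y.
  by move=> _; apply/ffunP => -[].
rewrite (encS x) (encS y) => E.
have E0 : x ord0 = y ord0.
  by move: E; case: (x ord0); case: (y ord0) => //; lia.
have /IH E1 : enc [ffun i : 'I_m => x (lift ord0 i)] = enc [ffun i : 'I_m => y (lift ord0 i)].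
  by rewrite E0 in E; lia.
apply/ffunP => i; case: (unliftP ord0 i) => [j ->|->] //.
by have := congr1 (fun f : {ffun 'I_m -> bool} => f j) E1; rewrite !ffunE.
Qed.

Lemma enc_lt m (x : {ffun 'I_m -> bool}) : enc x < 2 ^ m.
Proof.
elim: m x => [|m IH] x; first by rewrite /enc big_ord0.
rewrite encS expnS; have := IH [ffun i : 'I_m => x (lift ord0 i)].
case: (x ord0) => /=; lia.
Qed.

Lemma enc_ex m k : k < 2 ^ m -> exists x : {ffun 'I_m -> bool}, enc x = k.
Proof.
elim: m k => [|m IH] k.
  by rewrite expn0 ltnS leqn0 => /eqP ->; exists [ffun => false]; rewrite /enc big_ord0.
move=> Hk; have [x' Hx'] : exists x' : {ffun 'I_m -> bool}, enc x' = k./2.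
  apply: IH; rewrite expnS in Hk.
  have := odd_double_half k; lia.
exists [ffun i => if unlift ord0 i is Some j then x' j else odd k].
rewrite encS ffunE unlift_none.
have -> : [ffun i : 'I_m => [ffun i0 => if unlift ord0 i0 is Some j then x' j else odd k] (lift ord0 i)] = x'.
  by apply/ffunP => i; rewrite !ffunE liftK.
rewrite Hx'; have := odd_double_half k; rewrite -addnn; lia.
Qed.

Lemma enc_allT m (x y : {ffun 'I_m -> bool}) : Defs.allT x -> enc y <= enc x.
Proof.
move/forallP => H; rewrite /enc; apply: leq_sum => i _.
by rewrite H; case: (y i); rewrite ?mul1n ?mul0n.
Qed.

Lemma enc0 m : enc ([ffun => false] : {ffun 'I_m -> bool}) = 0.
Proof. by rewrite /enc big1 // => i _; rewrite ffunE. Qed.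

Theorem mainTheorem2 (m n : nat) (G : form m n) :
  (exists R : {set state m}, inductive_invariant G R /\ R != [set: state m]) <->
  (exists x : {ffun 'I_m -> bool}, forall y : {ffun 'I_n -> bool}, eval G x y).
Proof.
split.
- move=> [R [[Hi Ht] HR]].
  case: (boolP [exists x, forallY G x]) => [/existsP [x /forallP Hx]|Hn].
    by exists x.
  have Hnf : forall x, ~~ forallY G x.
    by move=> x; apply/negP => Hx; move/negP: Hn; apply; apply/existsP; exists x.
  have Hf : forall k (x : {ffun 'I_m -> bool}), enc x = k -> (x, false) \in R.
    elim=> [|k IH] x Ex.
      apply: Hi; split => //=; apply: enc_inj; by rewrite Ex enc0.
    have [x'' Ex''] : exists x'' : {ffun 'I_m -> bool}, enc x'' = k.
      apply: enc_ex; have := enc_lt x; lia.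
    apply: (Ht (x'', false)); first exact: IH.
    left; split; first exact: Hnf.
    left; split => //=; last by rewrite Ex Ex'' addn1.
    apply/negP => /(enc_allT x); lia.
  exfalso; move/negP: HR; apply; apply/eqP/setP => -[x o]; rewrite inE.
  case: o; last exact: (Hf _ x erefl).
  pose t : {ffun 'I_m -> bool} := [ffun => true].
  apply: (Ht (t, false)); first exact: (Hf _ t erefl).
  left; split; first exact: Hnf.
  right; split => //=; apply/forallP => i; by rewrite ffunE.
- move=> [x0 Hx0].
  have Hx0' : forallY G x0 by apply/forallP.
  exists [set s : state m | ~~ s.2 && (enc s.1 <= enc x0)]; split; last first.
    apply/negP => /eqP/setP /(_ (x0, true)); by rewrite !inE.
  split.
    move=> [x o] [/= -> ->]; by rewrite inE /= enc0.
  move=> [x o] [x' o'] /=; rewrite !inE /= => /andP [Ho Hle].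
  case=> [[Hf [[Ha [He Ho']]|[Ha _]]]|[/= -> ->]]; last by rewrite Ho Hle.
  + have Hlt : enc x < enc x0.
      rewrite ltn_neqAle Hle andbT; apply/eqP => /enc_inj E.
      by rewrite E Hx0' in Hf.
    by move: Ho' He => /= -> ->; rewrite Ho addn1.
  + have := enc_allT x0 Ha => H.
    have E : x = x0 by apply: enc_inj; apply/eqP; rewrite eqn_leq Hle H.
    by rewrite E Hx0' in Hf.
Qed.
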